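(* Let $n\geq 3$ be an integer, let $\varphi : X \to X$ be a morphism in $\mathscr{C}$, and let $\kappa : K \to X$ be a kernel of $\varphi$. Then $\varphi$ has a core inverse if and only if $\varphi$ has a cokernel $\lambda : X \to L$ such that both $\kappa\lambda : K\to L$ and $\varphi^{*}\varphi^{n}+\kappa^{*}\kappa : X\to X$ are invertible. In this case $$\varphi^{\mathrm{core}}=\varphi^{n-1}(\varphi^{*}\varphi^{n}+\kappa^{*}\kappa)^{-1}\varphi^{*}.$$
   Context: $\mathscr{C}$ is an additive category with an involution $*$: a map on morphisms sending $\varphi : X\to Y$ to $\varphi^* : Y \to X$ such that $(\varphi^* )^*=\varphi$, $(\varphi\psi)^*=\psi^*\varphi^*$ and $(\varphi+\phi)^*=\varphi^*+\phi^*$. Composition is written left to right: for $\varphi : X\to Y$ and $\psi : Y\to Z$, $\varphi\psi : X \to Z$ means ''first $\varphi$, then $\psi$''. A kernel of $\varphi : X\to Y$ is a morphism $\kappa : K\to X$ with $\kappa\varphi=0$ such that every $\alpha : M\to X$ with $\alpha\varphi=0$ factors uniquely as $\alpha=\alpha'\kappa$. A cokernel of $\varphi$ is a morphism $\lambda : Y\to L$ with $\varphi\lambda=0$ such that every $\beta : Y\to M$ with $\varphi\beta=0$ factors uniquely as $\beta=\lambda\beta'$. A morphism is invertible if it has a two-sided inverse. For $\varphi : X\to X$, a core inverse of $\varphi$ is a morphism $\chi : X\to X$ with $(\varphi\chi)^*=\varphi\chi$, $\varphi\chi^2=\chi$ and $\chi\varphi^2=\varphi$. It is unique when it exists and is denoted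 $\varphi^{\mathrm{core}}$. *)

(* Defs.v *)
From HB Require Import structures.
From mathcomp Require Import all_boot all_algebra.
Set Implicit Arguments. Unset Strict Implicit. Unset Printing Implicit Defensive.
Import GRing.Theory.
Local Open Scope ring_scope.

(* An additive category with an involution.  Composition is written
   left to right: [mcomp f g] means "first f, then g". *)
Record AddInvCat := {
  Ob :> Type;
  Mor : Ob -> Ob -> zmodType;
  midm : forall X : Ob, Mor X X;
  mcomp : forall X Y Z : Ob, Mor X Y -> Mor Y Z -> Mor X Z;
  mstar : forall X Y : Ob, Mor X Y -> Mor Y X;
  compA : forall (X Y Z W : Ob) (f : Mor X Y) (g : Mor Y Z) (h : Mor Z W),
      mcomp f (mcomp g h) = mcomp (mcomp f g) h;
  comp1m : forall (X Y : Ob) (f : Mor X Y), mcomp (midm X) f = f;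
  compm1 : forall (X Y : Ob) (f : Mor X Y), mcomp f (midm Y) = f;
  compDl : forall (X Y Z : Ob) (f f' : Mor X Y) (g : Mor Y Z),
      mcomp (f + f') g = mcomp f g + mcomp f' g;
  compDr : forall (X Y Z : Ob) (f : Mor X Y) (g g' : Mor Y Z),
      mcomp f (g + g') = mcomp f g + mcomp f g';
  zero_obj : exists Z : Ob, forall X : Ob,
      (forall f g : Mor Z X, f = g) /\ (forall f g : Mor X Z, f = g);
  biprod : forall X Y : Ob, exists (P : Ob) (i1 : Mor X P) (i2 : Mor Y P)
      (p1 : Mor P X) (p2 : Mor P Y),
      [/\ mcomp i1 p1 = midm X, mcomp i2 p2 = midm Y, mcomp i1 p2 = 0,
          mcomp i2 p1 = 0 & mcomp p1 i1 + mcomp p2 i2 = midm P];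
  starK : forall (X Y : Ob) (f : Mor X Y), mstar (mstar f) = f;
  starM : forall (X Y Z : Ob) (f : Mor X Y) (g : Mor Y Z),
      mstar (mcomp f g) = mcomp (mstar g) (mstar f);
  starD : forall (X Y : Ob) (f g : Mor X Y), mstar (f + g) = mstar f + mstar g
}.

Arguments midm {_} X.
Arguments mcomp {_ X Y Z}.
Arguments mstar {_ X Y}.

Section Defs.
Variable C : AddInvCat.

Definition is_kernel (X Y K : C) (phi : Mor X Y) (kappa : Mor K X) : Prop :=
  mcomp kappa phi = 0 /\
  forall (M : C) (alpha : Mor M X), mcomp alpha phi = 0 ->
    exists! alpha' : Mor M K, alpha = mcomp alpha' kappa.

Definition is_cokernel (X Y L : C) (phi : Mor X Y) (lambda : Mor Y L) : Prop :=
  mcomp phi lambda = 0 /\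
  forall (M : C) (beta : Mor Y M), mcomp phi beta = 0 ->
    exists! beta' : Mor L M, beta = mcomp lambda beta'.

Definition is_inverse (X Y : C) (f : Mor X Y) (g : Mor Y X) : Prop :=
  mcomp f g = midm X /\ mcomp g f = midm Y.

Definition invertible (X Y : C) (f : Mor X Y) : Prop :=
  exists g : Mor Y X, is_inverse f g.

Fixpoint powm (X : C) (f : Mor X X) (n : nat) : Mor X X :=
  match n with
  | O => midm X
  | S k => mcomp f (powm f k)
  end.

Definition core_inverse (X : C) (phi chi : Mor X X) : Prop :=
  [/\ mstar (mcomp phi chi) = mcomp phi chi,
      mcomp phi (mcomp chi chi) = chi &
      mcomp chi (mcomp phi phi) = phi].

End Defs.

(* Main.v *)
Require Import Defs.
From HB Require Import structures.
From mathcomp Require Import all_boot all_algebra.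
Import GRing.Theory.
Local Open Scope ring_scope.
Local Notation "f ⊙ g" := (mcomp f g) (at level 40, left associativity).

Lemma comp0l (C : AddInvCat) (X Y Z : C) (g : Mor Y Z) : (0 : Mor X Y) ⊙ g = 0.
Proof. have H := compDl (0:Mor X Y) 0 g; rewrite addr0 in H.
by apply: (addrI ((0 : Mor X Y) ⊙ g)); rewrite addr0 -H. Qed.
Lemma comp0r (C : AddInvCat) (X Y Z : C) (f : Mor X Y) : f ⊙ (0 : Mor Y Z) = 0.
Proof. have H := compDr f (0:Mor Y Z) 0; rewrite addr0 in H.
by apply: (addrI (f ⊙ (0 : Mor Y Z))); rewrite addr0 -H. Qed.
Lemma compNl (C : AddInvCat) (X Y Z : C) (f : Mor X Y) (g : Mor Y Z) : (- f) ⊙ g = - (f ⊙ g).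
Proof. by apply: (addrI (f ⊙ g)); rewrite -compDl !subrr comp0l. Qed.
Lemma compNr (C : AddInvCat) (X Y Z : C) (f : Mor X Y) (g : Mor Y Z) : f ⊙ (- g) = - (f ⊙ g).
Proof. by apply: (addrI (f ⊙ g)); rewrite -compDr !subrr comp0r. Qed.
Lemma compBl (C : AddInvCat) (X Y Z : C) (f f' : Mor X Y) (g : Mor Y Z) : (f - f') ⊙ g = f ⊙ g - f' ⊙ g.
Proof. by rewrite compDl compNl. Qed.
Lemma compBr (C : AddInvCat) (X Y Z : C) (f : Mor X Y) (g g' : Mor Y Z) : f ⊙ (g - g') = f ⊙ g - f ⊙ g'.
Proof. by rewrite compDr compNr. Qed.
Lemma star0 (C : AddInvCat) (X Y : C) : mstar (0 : Mor X Y) = 0.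
Proof. have H := starD (0:Mor X Y) 0; rewrite addr0 in H.
by apply: (addrI (mstar (0 : Mor X Y))); rewrite addr0 -H. Qed.
Lemma starN (C : AddInvCat) (X Y : C) (f : Mor X Y) : mstar (- f) = - mstar f.
Proof. by apply: (addrI (mstar f)); rewrite -starD !subrr star0. Qed.
Lemma starB (C : AddInvCat) (X Y : C) (f g : Mor X Y) : mstar (f - g) = mstar f - mstar g.
Proof. by rewrite starD starN. Qed.
Lemma star1 (C : AddInvCat) (X : C) : mstar (midm X) = midm X.
Proof.
rewrite -[X in X = _]comp1m -{1}(starK (midm X)) -starM comp1m starK //.
Qed.
Lemma powS' (C : AddInvCat) (X : C) (f : Mor X X) k : powm f k.+1 = powm f k ⊙ f.
Proof.
elim: k => [|k IH]; first by rewrite /= compm1 comp1m.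
change (f ⊙ powm f k.+1 = powm f k.+1 ⊙ f); by rewrite [in LHS]IH Defs.compA.
Qed.
Arguments powS' {C X}.

Lemma cx2 (C : AddInvCat) (A B D W : C) (a : Mor A B) (b : Mor B D) (c : Mor A D) (p : Mor W A) :
  a ⊙ b = c -> p ⊙ a ⊙ b = p ⊙ c.
Proof. by move=> h; rewrite -Defs.compA h. Qed.
Lemma cx3 (C : AddInvCat) (A B D E W : C) (a : Mor A B) (b : Mor B D) (d : Mor D E) (c : Mor A E) (p : Mor W A) :
  a ⊙ b ⊙ d = c -> p ⊙ a ⊙ b ⊙ d = p ⊙ c.
Proof. by move=> h; rewrite -h !Defs.compA. Qed.
Arguments cx2 {C A B D W a b c} p.
Arguments cx3 {C A B D E W a b d c} p.
Lemma cx4 (C : AddInvCat) (A B D E F W : C) (a : Mor A B) (b : Mor B D) (d : Mor D E) (e : Mor E F) (c : Mor A F) (p : Mor W A) :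
  a ⊙ b ⊙ d ⊙ e = c -> p ⊙ a ⊙ b ⊙ d ⊙ e = p ⊙ c.
Proof. by move=> h; rewrite -h !Defs.compA. Qed.
Arguments cx4 {C A B D E F W a b d e c} p.

Lemma ksplit (C : AddInvCat) (X K : C) (f : Mor X X) (k : Mor K X) (hk : is_kernel f k)
  (s : Mor X X) : s ⊙ f = 0 -> k ⊙ s = k -> exists t : Mor X K, t ⊙ k = s /\ k ⊙ t = midm K.
Proof.
case: hk => kf univ sf ks.
case: (univ X s sf) => t [ts _].
exists t; split; first by rewrite ts.
case: (univ K k kf) => t0 [_ uniq].
have h1 := uniq (midm K) (esym (comp1m _)).
have h2 : t0 = k ⊙ t by apply: uniq; rewrite -Defs.compA -ts ks.
by rewrite -h2 h1.
Qed.

Lemma La (C : AddInvCat) (X : C) (f x : Mor X X) : x ⊙ (f ⊙ f) = f ->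
  forall k, powm x k.+1 ⊙ powm f k.+1 = x ⊙ f.
Proof.
move=> H3; elim=> [|k IH]; first by rewrite /= !compm1.
have ex : powm x k.+2 = x ⊙ powm x k.+1 by [].
rewrite (powS' f k.+1) ex; move: IH; move: (powm x k.+1) (powm f k.+1) => P Q IH.
rewrite -!Defs.compA (Defs.compA P) IH.
by rewrite -(Defs.compA x f f) H3.
Qed.
Lemma Lb (C : AddInvCat) (X : C) (f x : Mor X X) : f ⊙ (x ⊙ x) = x ->
  forall k, powm f k.+1 ⊙ powm x k.+1 = f ⊙ x.
Proof.
move=> H2; elim=> [|k IH]; first by rewrite /= !compm1.
have ex : powm f k.+2 = f ⊙ powm f k.+1 by [].
rewrite (powS' x k.+1) ex; move: IH; move: (powm x k.+1) (powm f k.+1) => P Q IH.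
rewrite -!Defs.compA (Defs.compA Q) IH.
by rewrite -(Defs.compA f x x) H2.
Qed.
Lemma Lc (C : AddInvCat) (X : C) (f x : Mor X X) : f ⊙ (x ⊙ x) = x ->
  forall k, powm f k ⊙ powm x k.+1 = x.
Proof.
move=> H2; elim=> [|k IH]; first by rewrite /= comp1m compm1.
have ex : powm f k.+1 = f ⊙ powm f k by [].
rewrite (powS' x k.+1) ex; move: IH; move: (powm x k.+1) (powm f k) => P Q IH.
rewrite -!Defs.compA (Defs.compA Q) IH.
by rewrite H2.
Qed.
Arguments ksplit {C X K f k} hk {s}.
Arguments La {C X f x}.
Arguments Lb {C X f x}.
Arguments Lc {C X f x}.
Arguments comp0l {C X Y Z}. Arguments comp0r {C X Y Z}.
Arguments compNl {C X Y Z}. Arguments compNr {C X Y Z}.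
Arguments compBl {C X Y Z}. Arguments compBr {C X Y Z}.
Arguments star0 {C X Y}. Arguments starN {C X Y}. Arguments starB {C X Y}.
Arguments star1 {C}.

Ltac nrm := rewrite ?(compDl, compDr, compBl, compBr, Defs.compA, comp1m, compm1, comp0l, comp0r).

Lemma fwdA (C : AddInvCat) (X K : C) (f x fs xs Fn Xn : Mor X X) (k : Mor K X) (ks u : Mor X K) (us : Mor K X)
 (h1 : xs ⊙ fs = f ⊙ x)
 (h2 : xs ⊙ ks = 0)
 (h3 : f ⊙ x ⊙ Fn = Fn)
 (h4 : Xn ⊙ Fn = x ⊙ f)
 (h5 : fs ⊙ xs ⊙ fs = fs)
 (h6 : u ⊙ k = midm X - f⊙x)
 (h7 : ks ⊙ us = midm X - f ⊙ x)
 (h8 : us ⊙ ks = midm K)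
 (h9 : f ⊙ x ⊙ ks = 0)
 (h10 : x ⊙ f ⊙ f = f)
 (h11 : xs ⊙ fs ⊙ xs = xs)
 (h12 : k ⊙ Xn = 0)
 (h13 : Fn ⊙ x ⊙ f = Fn)
 (h14 : k ⊙ x = 0)
 (h15 : k ⊙ u = midm K)
 (h16 : f ⊙ x ⊙ f = f)
 (h17 : f ⊙ x ⊙ fs ⊙ xs = f ⊙ x)
 (h18 : Fn ⊙ Xn = f ⊙ x) :
 let psi := Xn ⊙ xs + (midm X - x ⊙ f) ⊙ u ⊙ (us ⊙ u) ⊙ k ⊙ (midm X - fs ⊙ xs) in
 let A := fs ⊙ Fn + ks ⊙ k in
 psi ⊙ A = midm X /\ A ⊙ psi = midm X.
Proof.
move=> psi A; rewrite /psi /A {psi A}.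
have P2 : (midm X - f ⊙ x) ⊙ (midm X - f ⊙ x) = midm X - f ⊙ x.
  by rewrite compBr compm1 compBl comp1m !Defs.compA h16 subrr subr0.
set E := midm X - x ⊙ f; set Es := midm X - fs ⊙ xs.
have EsF : Es ⊙ fs = 0 by rewrite compBl comp1m h5 subrr.
have EsK : Es ⊙ ks = ks by rewrite compBl comp1m -Defs.compA h2 comp0r subr0.
have G : us ⊙ u ⊙ k ⊙ ks = midm K.
  by rewrite -(Defs.compA us) h6 compBr compm1 compBl h8 -(Defs.compA us) h9 comp0r subr0.
have Ef0 : E ⊙ f = 0 by rewrite /E compBl comp1m h10 subrr.
have Ef : E ⊙ f ⊙ x = 0 by rewrite Ef0 comp0l.
have Eu : E ⊙ u ⊙ k = E.
  by rewrite -Defs.compA h6 compBr compm1 Defs.compA Ef subr0.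
have TA : Xn ⊙ xs ⊙ (fs ⊙ Fn + ks ⊙ k) = x ⊙ f.
  rewrite compDr !Defs.compA -(Defs.compA Xn xs fs) h1 -(Defs.compA Xn xs ks) h2 comp0r comp0l addr0.
  by rewrite !Defs.compA (cx3 _ h3) h4.
have SA : E ⊙ u ⊙ (us ⊙ u) ⊙ k ⊙ Es ⊙ (fs ⊙ Fn + ks ⊙ k) = E.
  rewrite compDr !Defs.compA -(Defs.compA _ Es fs) EsF comp0r comp0l add0r.
  by rewrite -(Defs.compA _ Es ks) EsK ?Defs.compA (cx4 (E ⊙ u) G) compm1 Eu.
have KX : k ⊙ E = k by rewrite /E compBr compm1 Defs.compA h14 comp0l subr0.
have PE : (midm X - f ⊙ x) ⊙ Es = Es.
  rewrite /Es compBr compm1 compBl comp1m !Defs.compA h17.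
  by rewrite opprB addrA subrK.
have FE : Fn ⊙ E = 0 by rewrite /E compBr compm1 Defs.compA h13 subrr.
have AT : (fs ⊙ Fn + ks ⊙ k) ⊙ (Xn ⊙ xs) = fs ⊙ xs.
  rewrite compDl !Defs.compA -(Defs.compA ks k Xn) h12 comp0r !comp0l addr0.
  by rewrite -(Defs.compA fs Fn Xn) h18 -h1 !Defs.compA h5.
have AS : (fs ⊙ Fn + ks ⊙ k) ⊙ (E ⊙ u ⊙ (us ⊙ u) ⊙ k ⊙ Es) = Es.
  rewrite compDl !Defs.compA -(Defs.compA fs Fn E) FE comp0r !comp0l add0r.
  rewrite -(Defs.compA ks k E) KX -(Defs.compA ks k u) h15 compm1.
  by rewrite h7 -(Defs.compA _ u k) h6 P2 PE.
split.
  by rewrite compDl TA SA addrC subrK.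
by rewrite compDr AT AS addrC subrK.
Qed.

Arguments fwdA {C X K f x fs xs Fn Xn k ks u us}.

Lemma fwd (C : AddInvCat) (X K : C) (f : Mor X X) (k : Mor K X) (hk : is_kernel f k)
  (x : Mor X X) (m : nat) (hx : core_inverse f x) :
  [/\ exists (L : C) (lam : Mor X L), is_cokernel f lam /\ invertible (k ⊙ lam),
      invertible (mstar f ⊙ powm f m.+2 + mstar k ⊙ k) &
      forall psi, (mstar f ⊙ powm f m.+2 + mstar k ⊙ k) ⊙ psi = midm X ->
        x = powm f m.+1 ⊙ (psi ⊙ mstar f)].
Proof.
case: hx => H1 H2 H3.
have kf : k ⊙ f = 0 by case: hk.
have h10 : x ⊙ f ⊙ f = f by rewrite -Defs.compA H3.
have h16 : f ⊙ x ⊙ f = f.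
  by rewrite -{2}H3 !Defs.compA -(Defs.compA f x x) H2 h10.
have hxfx : x ⊙ f ⊙ x = x.
  by rewrite -{2}H2 !Defs.compA h10 -Defs.compA H2.
have h14 : k ⊙ x = 0 by rewrite -H2 Defs.compA kf comp0l.
have [u [h6 h15]] : exists u : Mor X K, u ⊙ k = midm X - f ⊙ x /\ k ⊙ u = midm K.
  apply: (ksplit hk).
    by rewrite compBl comp1m h16 subrr.
  by rewrite compBr compm1 Defs.compA kf comp0l subr0.
have [v [hv1 hv2]] : exists v : Mor X K, v ⊙ k = midm X - x ⊙ f /\ k ⊙ v = midm K.
  apply: (ksplit hk).
    by rewrite compBl comp1m h10 subrr.
  by rewrite compBr compm1 Defs.compA h14 comp0l subr0.
have h1 : mstar x ⊙ mstar f = f ⊙ x by rewrite -starM H1.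
have h2 : mstar x ⊙ mstar k = 0 by rewrite -starM h14 star0.
have h3 : f ⊙ x ⊙ powm f m.+2 = powm f m.+2.
  by rewrite (_ : powm f m.+2 = f ⊙ powm f m.+1) // Defs.compA h16.
have h4 := La H3 m.+1.
have h5 : mstar f ⊙ mstar x ⊙ mstar f = mstar f by rewrite -Defs.compA -!starM h16.
have h7 : mstar k ⊙ mstar u = midm X - f ⊙ x by rewrite -starM h6 starB star1 H1.
have h8 : mstar u ⊙ mstar k = midm K by rewrite -starM h15 star1.
have h9 : f ⊙ x ⊙ mstar k = 0 by rewrite -{1}H1 -starM Defs.compA kf comp0l star0.
have h11 : mstar x ⊙ mstar f ⊙ mstar x = mstar x by rewrite -Defs.compA -!starM hxfx.
have h12 : k ⊙ powm x m.+2 = 0.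
  by rewrite (_ : powm x m.+2 = x ⊙ powm x m.+1) // Defs.compA h14 comp0l.
have h13 : powm f m.+2 ⊙ x ⊙ f = powm f m.+2 by rewrite powS' (cx3 _ h16).
have h17 : f ⊙ x ⊙ mstar f ⊙ mstar x = f ⊙ x.
  have e1 : mstar (x ⊙ f ⊙ f ⊙ x) = f ⊙ x by rewrite h10 H1.
  have e2 : mstar (x ⊙ f ⊙ f ⊙ x) = mstar x ⊙ mstar f ⊙ mstar f ⊙ mstar x.
    by rewrite !starM !Defs.compA.
  by rewrite -{1}h1 -e2 e1.
have h18 := Lb H2 m.+1.
have [hA1 hA2] := fwdA h1 h2 h3 h4 h5 h6 h7 h8 h9 h10 h11 h12 h13 h14 h15 h16 h17 h18.
split.
- exists K, v; split; last by exists (midm K); rewrite hv2; split; exact: comp1m.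
  have fv : f ⊙ v = 0.
    rewrite -(compm1 (f ⊙ v)) -hv2 !Defs.compA -(Defs.compA f v k) hv1.
    by rewrite compBr compm1 Defs.compA h16 subrr comp0l.
  split => // M beta fb.
  exists (k ⊙ beta); split.
    by rewrite Defs.compA hv1 compBl comp1m -Defs.compA fb comp0r subr0.
  by move=> b' ->; rewrite Defs.compA hv2 comp1m.
- by eexists; split; [exact: hA2 | exact: hA1].
move=> psi hpsi.
have TA : powm x m.+2 ⊙ mstar x ⊙ (mstar f ⊙ powm f m.+2 + mstar k ⊙ k) = x ⊙ f.
  move: h3 h4; move: (powm f m.+2) (powm x m.+2) => Fn Xn h3 h4.
  rewrite compDr !Defs.compA -(Defs.compA _ (mstar x) (mstar f)) h1.
  rewrite -(Defs.compA _ (mstar x) (mstar k)) h2 comp0r comp0l addr0.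
  by rewrite !Defs.compA (cx3 _ h3) h4.
have T1 : powm x m.+2 ⊙ mstar x = x ⊙ f ⊙ psi.
  by rewrite -TA -Defs.compA hpsi compm1.
have F1 : powm f m.+1 ⊙ x ⊙ f = powm f m.+1 by rewrite powS' (cx3 _ h16).
move: F1 T1 (Lc H2 m.+1); move: (powm f m.+1) (powm x m.+2) => P Xn F1 T1 Lc'.
rewrite -[in RHS]F1 !Defs.compA (cx3 P (esym T1)) !Defs.compA Lc' (cx2 x h1) Defs.compA hxfx //.
Qed.

Lemma bwd (C : AddInvCat) (X K L : C) (f : Mor X X) (k : Mor K X) (lam : Mor X L) (w : Mor L K)
  (Fm psi : Mor X X)
  (kf : k ⊙ f = 0) (fl : f ⊙ lam = 0) (klw : k ⊙ lam ⊙ w = midm K)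
  (hc : f ⊙ (f ⊙ Fm) = f ⊙ Fm ⊙ f)
  (hA1 : psi ⊙ (mstar f ⊙ (f ⊙ (f ⊙ Fm)) + mstar k ⊙ k) = midm X)
  (hA2 : (mstar f ⊙ (f ⊙ (f ⊙ Fm)) + mstar k ⊙ k) ⊙ psi = midm X) :
  core_inverse f (f ⊙ Fm ⊙ (psi ⊙ mstar f)).
Proof.
have hcc : forall W (q : Mor W X), q ⊙ f ⊙ f ⊙ Fm = q ⊙ f ⊙ Fm ⊙ f.
  by move=> W q; rewrite -!Defs.compA hc !Defs.compA.
have flc : forall W (q : Mor W X), q ⊙ f ⊙ lam = 0.
  by move=> W q; rewrite -Defs.compA fl comp0r.
have e2 : psi ⊙ mstar k ⊙ k ⊙ lam = lam.
  have := congr1 (fun z => z ⊙ lam) hA1; rewrite /= comp1m compDr compDl !Defs.compA.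
  by rewrite (hcc _ (psi ⊙ mstar f)) flc add0r.
have S1 : psi ⊙ mstar k = lam ⊙ w.
  by rewrite -(compm1 (psi ⊙ mstar k)) -klw !Defs.compA e2.
have S2 : psi ⊙ mstar f ⊙ f ⊙ f ⊙ Fm = midm X - lam ⊙ w ⊙ k.
  by move: hA1; rewrite compDr !Defs.compA S1 => <-; rewrite addrK.
have hA2s := congr1 mstar hA2.
rewrite starM starD !starM !starK star1 in hA2s.
have e2' : mstar psi ⊙ mstar k ⊙ k ⊙ lam = lam.
  have := congr1 (fun z => z ⊙ lam) hA2s; rewrite /= comp1m compDr compDl !Defs.compA.
  by rewrite flc add0r.
have S1' : mstar psi ⊙ mstar k = lam ⊙ w.
  by rewrite -(compm1 (mstar psi ⊙ mstar k)) -klw !Defs.compA e2'.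
have S3 : f ⊙ mstar psi ⊙ mstar Fm ⊙ mstar f ⊙ mstar f ⊙ f = f.
  have := congr1 (fun z => f ⊙ z) hA2s; rewrite /= compm1 !compDr !Defs.compA.
  by rewrite (cx2 f S1') !Defs.compA fl !comp0l addr0.
have S4 : mstar (f ⊙ f ⊙ Fm ⊙ psi ⊙ mstar f) ⊙ (f ⊙ f ⊙ Fm ⊙ psi ⊙ mstar f)
          = f ⊙ f ⊙ Fm ⊙ psi ⊙ mstar f.
  by rewrite !starM starK !Defs.compA S3.
have Ps : mstar (f ⊙ f ⊙ Fm ⊙ psi ⊙ mstar f) = f ⊙ f ⊙ Fm ⊙ psi ⊙ mstar f.
  by rewrite -{1}S4 starM starK S4.
have S5 : f ⊙ f ⊙ Fm ⊙ psi ⊙ mstar f ⊙ f = f.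
  by rewrite -Ps !starM starK !Defs.compA S3.
have S5c : forall W (q : Mor W X), q ⊙ f ⊙ f ⊙ Fm ⊙ psi ⊙ mstar f ⊙ f = q ⊙ f.
  by move=> W q; have := congr1 (fun z => q ⊙ z) S5; rewrite /= !Defs.compA.
split.
- by rewrite !Defs.compA Ps.
- by rewrite !Defs.compA S5.
have chiE : f ⊙ Fm ⊙ psi ⊙ mstar f = psi ⊙ mstar f ⊙ f ⊙ f ⊙ Fm ⊙ f ⊙ Fm ⊙ psi ⊙ mstar f.
  transitivity ((midm X - lam ⊙ w ⊙ k) ⊙ (f ⊙ Fm ⊙ psi ⊙ mstar f)).
    by rewrite compBl comp1m !Defs.compA (cx2 (lam ⊙ w) kf) comp0r !comp0l subr0.
  by rewrite -S2 !Defs.compA.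
rewrite !Defs.compA chiE (hcc _ (psi ⊙ mstar f)) S5c -(hcc _ (psi ⊙ mstar f)) S2.
by rewrite compBl comp1m (cx2 (lam ⊙ w) kf) comp0r subr0.
Qed.
Arguments fwd {C X K f k} hk {x} m hx.
Arguments bwd {C X K L f k lam w Fm psi}.

Theorem mainTheorem3 (C : AddInvCat) (n : nat) (hn : (3 <= n)%N)
    (X K : C) (phi : Mor X X) (kappa : Mor K X) (hk : is_kernel phi kappa) :
  ((exists chi : Mor X X, core_inverse phi chi) <->
   (exists (L : C) (lambda : Mor X L),
      [/\ is_cokernel phi lambda,
          invertible (mcomp kappa lambda) &
          invertible (mcomp (mstar phi) (powm phi n) + mcomp (mstar kappa) kappa)]))
  /\
  (forall (chi psi : Mor X X), core_inverse phi chi ->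
     is_inverse (mcomp (mstar phi) (powm phi n) + mcomp (mstar kappa) kappa) psi ->
     chi = mcomp (powm phi (n - 1)) (mcomp psi (mstar phi))).
Proof.
case: n hn => [|[|m]] // hn.
have -> : (m.+2 - 1 = m.+1)%N by rewrite subn1.
have kf : kappa ⊙ phi = 0 by case: hk.
split; first split.
- case=> x hx; case: (fwd hk m hx) => [[L [lam [hc hi]]] hA _].
  by exists L, lam; split.
- case=> L [lam [[fl univ] [w [klw _]] [psi [hA1 hA2]]]].
  exists (powm phi m.+1 ⊙ (psi ⊙ mstar phi)).
  exact: (bwd (Fm := powm phi m) kf fl klw (powS' phi m.+1) hA2 hA1).
- move=> chi psi hchi [hA1 hA2].
  by case: (fwd hk m hchi) => _ _ H; exact: H psi hA1.
Qed.
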